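(* Let $f$ be a piecewise smooth function with rational discontinuities at $0\le x_1<\dots<x_\nu<1$; put $x_0=0$, $A_i=\lim_{\delta\to0}[f(x_i-\delta)-f(x_i+\delta)]$, $c_i=\sum_{j=1}^iA_j$, and $g(x)=(\{x\}-\tfrac12)\sum_{i=1}^\nu A_i+\sum_{i=1}^\nu c_i(\mathbb{1}_{[x_{i-1},x_i)}(\{x\})-(x_i-x_{i-1}))$. Assume $\sum_{i=1}^\nu A_i\ne0$ or $\sum_{i=1}^\nu c_i(x_i-x_{i-1})\ne0$. Then there exist constants $c,c'>0$ and integers $\mu_j,\beta_j,\gamma_j,\delta_j$ ($j=1,2$), depending on $f$, and a constant $D>0$ such that for every irrational $\alpha=[0;a_1,a_2,\dots]$ the following holds for all sufficiently large $K$ with $a_K$ sufficiently large: (1) if $K\equiv\mu_1\pmod{\beta_1}$ and $q_{K-1}\equiv\gamma_1\pmod{\delta_1}$, then for every integer $0\le b\le ca_K$, $S_{bq_{K-1}}(g,\alpha)\ge bc'-D\sum_{i=1}^{K-1}a_i$; (2) if $K\equiv\mu_2\pmod{\beta_2}$ and $q_{K-1}\equiv\gamma_2\pmod{\delta_2}$, then for every integer $0\le b\le ca_K$, $S_{bq_{K-1}}(g,\alpha)\le -bc'+D\sum_{i=1}^{K-1}a_i$.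
   Context: $\{x\}$ is the fractional part; $q_k$ are the convergent denominators of $\alpha$ ($q_0=1,q_1=a_1,q_{k+1}=a_{k+1}q_k+q_{k-1}$). $S_N(g,\alpha):=\sum_{n=1}^N g(n\alpha)-N\int_0^1 g$. A $1$-periodic $f$ is a piecewise smooth function with rational discontinuities if there exist $\nu\ge1$ and rationals $0\le x_1<\dots<x_\nu<1$ such that $f$ is differentiable on $[0,1)\setminus\{x_1,\dots,x_\nu\}$, the restriction of $f'$ to $[0,1)$ extends to a function of bounded variation on $[0,1)$, and $\lim_{\delta\to0}[f(x_i-\delta)-f(x_i+\delta)]\ne0$ for some $i$. *)

(* Defs.v *)
From Stdlib Require Import Reals ZArith Lra.
From Coquelicot Require Import Coquelicot.
Open Scope R_scope.

Fixpoint sum1 (F : nat -> R) (n : nat) : R :=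
  match n with
  | O => 0
  | S m => sum1 F m + F (S m)
  end.

Definition frac (x : R) : R := frac_part x.

Definition is_rational (x : R) : Prop :=
  exists p q : Z, q <> 0%Z /\ x = IZR p / IZR q.

Definition ind_Ico (a b y : R) : R :=
  if Rle_dec a y then (if Rlt_dec y b then 1 else 0) else 0.

Definition bounded_variation_01 (h : R -> R) : Prop :=
  exists M : R, forall (n : nat) (t : nat -> R),
    (forall k, (k <= n)%nat -> 0 <= t k < 1) ->
    (forall k, (k < n)%nat -> t k <= t (S k)) ->
    sum1 (fun k => Rabs (h (t k) - h (t (k - 1)%nat))) n <= M.

Definition piecewise_smooth_rational (f : R -> R) (nu : nat) (x : nat -> R)
  : Prop :=
  (forall y, f (y + 1) = f y) /\
  (1 <= nu)%nat /\
  (forall i, (1 <= i <= nu)%nat -> is_rational (x i)) /\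
  0 <= x 1%nat /\ x nu < 1 /\
  (forall i, (1 <= i < nu)%nat -> x i < x (S i)) /\
  (forall y, 0 <= y < 1 -> (forall i, (1 <= i <= nu)%nat -> y <> x i) ->
     ex_derive f y) /\
  (exists h : R -> R, bounded_variation_01 h /\
     forall y, 0 <= y < 1 -> (forall i, (1 <= i <= nu)%nat -> y <> x i) ->
       is_derive f y (h y)).

Definition jumps (f : R -> R) (nu : nat) (x : nat -> R) (A : nat -> R) : Prop :=
  forall i, (1 <= i <= nu)%nat ->
    filterlim (fun d => f (x i - d) - f (x i + d)) (at_right 0) (locally (A i)).

Definition xx (x : nat -> R) (i : nat) : R :=
  match i with O => 0 | _ => x i end.

Definition cc (A : nat -> R) (i : nat) : R := sum1 A i.

Definition gfun (nu : nat) (x A : nat -> R) (y : R) : R :=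
  (frac y - 1/2) * sum1 A nu +
  sum1 (fun i => cc A i * (ind_Ico (xx x (i - 1)) (xx x i) (frac y)
                             - (xx x i - xx x (i - 1)))) nu.

Definition SN (g : R -> R) (alpha : R) (N : nat) : R :=
  sum1 (fun n => g (INR n * alpha)) N - INR N * RInt g 0 1.

(* continued fraction expansion alpha = [0; a_1, a_2, ...] via the Gauss map *)
Fixpoint cf_rem (alpha : R) (k : nat) : R :=
  match k with
  | O => alpha
  | S m => frac (1 / cf_rem alpha m)
  end.

(* partial quotient a_k, k >= 1 *)
Definition cf_a (alpha : R) (k : nat) : Z :=
  Int_part (1 / cf_rem alpha (k - 1)).

(* (q_k, q_{k-1}) with q_0 = 1, q_{-1} = 0, q_{k+1} = a_{k+1} q_k + q_{k-1} *)
Fixpoint cf_qpair (alpha : R) (k : nat) : Z * Z :=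
  match k with
  | O => (1%Z, 0%Z)
  | S m => let (qm, qm1) := cf_qpair alpha m in
           (cf_a alpha (S m) * qm + qm1, qm)%Z
  end.

Definition cf_q (alpha : R) (k : nat) : Z := fst (cf_qpair alpha k).

(* Main.v *)
Require Import Defs.
From Stdlib Require Import Reals ZArith Lra Lia Permutation List.
From Coquelicot Require Import Coquelicot.
Open Scope R_scope.

Lemma Int_part_eq (y : R) (k : Z) : IZR k <= y < IZR k + 1 -> Int_part y = k.
Proof.
  intros [H1 H2]. unfold Int_part.
  rewrite <- (tech_up y (k+1)); [lia| rewrite plus_IZR; lra | rewrite plus_IZR; lra].
Qed.

Lemma frac_eq (y : R) (k : Z) : IZR k <= y < IZR k + 1 -> frac y = y - IZR k.
Proof. intros H. unfold frac, frac_part. rewrite (Int_part_eq y k H). reflexivity. Qed.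

Lemma frac_shift (y : R) (k : Z) : frac (y + IZR k) = frac y.
Proof.
  destruct (base_Int_part y) as [H1 H2].
  rewrite (frac_eq y (Int_part y)) by lra.
  rewrite (frac_eq (y + IZR k) (Int_part y + k)) by (rewrite plus_IZR; lra).
  rewrite plus_IZR; ring.
Qed.

Lemma frac_id (y : R) : 0 <= y < 1 -> frac y = y.
Proof. intros H. rewrite (frac_eq y 0) by (simpl; lra). simpl; ring. Qed.

Lemma is_RInt_cst (a b c l : R) : l = (b - a) * c -> is_RInt (fun _ => c) a b l.
Proof. intros ->. exact (is_RInt_const a b c). Qed.

Lemma is_RInt_val (f : R -> R) (a b l l' : R) : l = l' -> is_RInt f a b l -> is_RInt f a b l'.
Proof. intros ->; auto. Qed.

Lemma is_RInt_sum1 (F : nat -> R -> R) (I : nat -> R) (a b : R) (n : nat) :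
  (forall i, (1 <= i <= n)%nat -> is_RInt (F i) a b (I i)) ->
  is_RInt (fun y => sum1 (fun i => F i y) n) a b (sum1 I n).
Proof.
  induction n as [|n IH]; intros H; simpl.
  - apply is_RInt_cst; ring.
  - apply (is_RInt_plus (fun y => sum1 (fun i => F i y) n) (F (S n))).
    + apply IH. intros i Hi; apply H; lia.
    + apply H; lia.
Qed.

Lemma is_RInt_ind (u v : R) : 0 <= u <= v -> v <= 1 ->
  is_RInt (fun y => ind_Ico u v (frac y)) 0 1 (v - u).
Proof.
  intros Hu Hv.
  replace (v - u) with (plus (plus 0 (v - u)) 0) by (unfold plus; simpl; ring).
  apply (@is_RInt_Chasles R_NormedModule _ 0 v 1 (plus 0 (v-u)) 0);
    [apply (@is_RInt_Chasles R_NormedModule _ 0 u v 0 (v-u))|].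
  - apply is_RInt_ext with (fun _ => 0).
    + intros y Hy. rewrite Rmin_left in Hy by lra. rewrite Rmax_right in Hy by lra.
      rewrite frac_id by lra. unfold ind_Ico.
      destruct (Rle_dec u y); [lra|reflexivity].
    + apply is_RInt_cst; ring.
  - apply is_RInt_ext with (fun _ => 1).
    + intros y Hy. rewrite Rmin_left in Hy by lra. rewrite Rmax_right in Hy by lra.
      rewrite frac_id by lra. unfold ind_Ico.
      destruct (Rle_dec u y); [|lra]. destruct (Rlt_dec y v); [reflexivity|lra].
    + apply is_RInt_cst; ring.
  - apply is_RInt_ext with (fun _ => 0).
    + intros y Hy. rewrite Rmin_left in Hy by lra. rewrite Rmax_right in Hy by lra.
      rewrite frac_id by lra. unfold ind_Ico.
      destruct (Rle_dec u y); [|reflexivity]. destruct (Rlt_dec y v); [lra|reflexivity].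
    + apply is_RInt_cst; ring.
Qed.

Lemma is_RInt_saw : is_RInt (fun y => frac y - 1/2) 0 1 0.
Proof.
  apply is_RInt_ext with (fun y => y - 1/2).
  - intros y Hy. rewrite Rmin_left in Hy by lra. rewrite Rmax_right in Hy by lra.
    rewrite frac_id by lra. reflexivity.
  - apply (is_RInt_val _ 0 1 (minus ((fun y => y*y/2 - y/2) 1) ((fun y => y*y/2 - y/2) 0)));
      [unfold minus, plus, opp; simpl; field|].
    apply (is_RInt_derive (fun y => y*y/2 - y/2)).
    + intros y _. auto_derive; [exact I| field].
    + intros y _. apply continuity_pt_filterlim. apply continuity_pt_minus.
      apply continuity_pt_id. apply continuity_pt_const. intros u v; reflexivity.
Qed.

Lemma sum1_ext (F G : nat -> R) (n : nat) :
  (forall i, (1 <= i <= n)%nat -> F i = G i) -> sum1 F n = sum1 G n.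
Proof.
  induction n as [|n IH]; intros H; simpl; [reflexivity|].
  rewrite IH by (intros; apply H; lia). rewrite H by lia. reflexivity.
Qed.

Lemma sum1_zero (n : nat) : sum1 (fun _ => 0) n = 0.
Proof. induction n; simpl; [reflexivity| rewrite IHn; ring]. Qed.

Lemma RInt_g (nu : nat) (x A : nat -> R) :
  (forall i, (1 <= i <= nu)%nat -> 0 <= xx x (i-1) <= xx x i /\ xx x i <= 1) ->
  RInt (gfun nu x A) 0 1 = 0.
Proof.
  intros Hx. apply is_RInt_unique.
  apply is_RInt_val with (plus (scal (sum1 A nu) 0)
     (sum1 (fun i => scal (cc A i) (minus (xx x i - xx x (i-1)) ((1 - 0) * (xx x i - xx x (i-1))))) nu)).
  { unfold plus, scal, minus, opp, plus, mult; simpl. unfold mult, plus, opp; simpl.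
    rewrite (sum1_ext (fun i => cc A i * (xx x i - xx x (i - 1) + - ((1 - 0) * (xx x i - xx x (i - 1))))) (fun _ => 0)). rewrite sum1_zero. ring.
    intros i _. ring. }
  apply is_RInt_ext with (fun y => plus (scal (sum1 A nu) (frac y - 1/2))
     (sum1 (fun i => scal (cc A i) (minus (ind_Ico (xx x (i - 1)) (xx x i) (frac y)) (xx x i - xx x (i-1)))) nu)).
  { intros y _. unfold gfun, plus, scal, minus, opp; simpl. unfold mult, plus, opp; simpl. rewrite Rmult_comm. reflexivity. }
  apply (is_RInt_plus (V:=R_NormedModule)).
  - apply (is_RInt_scal (V:=R_NormedModule)). apply is_RInt_saw.
  - apply (is_RInt_sum1 (fun i y => scal (cc A i) (minus (ind_Ico (xx x (i - 1)) (xx x i) (frac y)) (xx x i - xx x (i-1))))).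
    intros i Hi. apply (is_RInt_scal (V:=R_NormedModule)). apply (is_RInt_minus (V:=R_NormedModule)).
    + destruct (Hx i Hi). apply is_RInt_ind; lra.
    + apply is_RInt_cst. reflexivity.
Qed.

Lemma rem_S (al : R) (k : nat) :
  cf_rem al (S k) = 1 / cf_rem al k - IZR (cf_a al (S k)).
Proof.
  simpl. unfold cf_a. replace (S k - 1)%nat with k by lia. unfold frac, frac_part. reflexivity.
Qed.

Lemma rem_props (al : R) : 0 < al < 1 -> ~ is_rational al ->
  forall k, 0 < cf_rem al k < 1 /\ ~ is_rational (cf_rem al k).
Proof.
  intros H1 H2 k. induction k as [|k [IH1 IH2]]; [simpl; auto|].
  pose proof (rem_S al k) as E.
  unfold cf_a in E. replace (S k - 1)%nat with k in E by lia.
  set (r := cf_rem al k) in *. set (a := Int_part (1 / r)) in *.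
  destruct (base_Int_part (1/r)) as [B1 B2]. fold a in B1, B2.
  assert (Hnr : cf_rem al (S k) <> 0).
  { intros Hz. apply IH2. exists 1%Z, a. split.
    - intros ->. simpl in *. assert (1/r > 0) by (apply Rdiv_lt_0_compat; lra). lra.
    - assert (IZR a = 1/r) by lra. rewrite H. field. lra. }
  split; [split; lra|].
  intros [P [Q [HQ HPQ]]]. apply IH2.
  assert (HQ' : IZR Q <> 0) by (apply not_0_IZR; auto).
  assert (Hs : IZR (a * Q + P) <> 0).
  { rewrite plus_IZR, mult_IZR. intros Hz.
    assert (1 / r = IZR a + IZR P / IZR Q) by lra.
    assert (1/r > 0) by (apply Rdiv_lt_0_compat; lra).
    assert (E3 : 1 / r * IZR Q = IZR a * IZR Q + IZR P) by (rewrite H; field; auto).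
    rewrite Hz in E3. apply Rmult_integral in E3. destruct E3; [lra| auto]. }
  exists Q, (a * Q + P)%Z. split.
  - intros Hz. apply Hs. rewrite Hz. reflexivity.
  - rewrite plus_IZR, mult_IZR in *.
    assert (E2 : 1 / r = (IZR a * IZR Q + IZR P) / IZR Q).
    { assert (1 / r = IZR a + IZR P / IZR Q) by lra. rewrite H. field; auto. }
    replace r with (1 / (1 / r)) by (field; lra). rewrite E2. field. split; auto.
Qed.

Lemma a_props (al : R) : 0 < al < 1 -> ~ is_rational al -> forall k,
  (1 <= cf_a al (S k))%Z /\ IZR (cf_a al (S k)) * cf_rem al k < 1.
Proof.
  intros H1 H2 k.
  destruct (rem_props al H1 H2 k) as [[R1 R2] _].
  destruct (rem_props al H1 H2 (S k)) as [[R3 R4] _].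
  pose proof (rem_S al k) as E.
  unfold cf_a in *. replace (S k - 1)%nat with k in * by lia.
  destruct (base_Int_part (1/cf_rem al k)) as [B1 B2].
  assert (1 / cf_rem al k > 1).
  { apply (Rmult_lt_reg_r (cf_rem al k)); [lra|]. field_simplify; lra. }
  split.
  - apply le_IZR. assert (IZR (Int_part (1 / cf_rem al k)) > 0) by lra.
    assert (0 < Int_part (1 / cf_rem al k))%Z by (apply lt_IZR; simpl; lra). 
    apply IZR_le. lia.
  - assert (IZR (Int_part (1 / cf_rem al k)) < 1 / cf_rem al k) by lra.
    apply (Rmult_lt_compat_r (cf_rem al k)) in H0; [|lra].
    replace (1 / cf_rem al k * cf_rem al k) with 1 in H0 by (field; lra). exact H0.
Qed.

Fixpoint cf_ppair (al : R) (k : nat) : Z * Z :=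
  match k with
  | O => (0%Z, 1%Z)
  | S m => let (pm, pm1) := cf_ppair al m in (cf_a al (S m) * pm + pm1, pm)%Z
  end.

Fixpoint UU (al : R) (k : nat) : R :=
  match k with O => cf_rem al 0 | S m => UU al m * cf_rem al (S m) end.

Definition Up (al : R) (k : nat) : R := match k with O => 1 | S m => UU al m end.

Lemma UU_Up (al : R) (k : nat) : UU al k = Up al k * cf_rem al k.
Proof. destruct k; simpl; ring. Qed.

Lemma UU_pos (al : R) : 0 < al < 1 -> ~ is_rational al -> forall k, 0 < UU al k.
Proof.
  intros H1 H2 k; induction k.
  - destruct (rem_props al H1 H2 0); simpl in *; lra.
  - change (0 < UU al k * cf_rem al (S k)). destruct (rem_props al H1 H2 (S k)) as [[? ?] _]. apply Rmult_lt_0_compat; lra.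
Qed.

Lemma cf_inv (al : R) : 0 < al < 1 -> ~ is_rational al -> forall k q q' p p',
  cf_qpair al k = (q, q') -> cf_ppair al k = (p, p') ->
  IZR q * al - IZR p = (-1)^k * UU al k /\
  IZR q' * al - IZR p' = - (-1)^k * Up al k /\
  ((q * p' - p * q' = 1) \/ (q * p' - p * q' = -1))%Z /\ (1 <= q)%Z /\ (0 <= q')%Z.
Proof.
  intros H1 H2 k. induction k as [|k IH]; intros q q' p p' Eq Ep.
  - simpl in Eq, Ep. injection Eq; injection Ep; intros; subst. simpl.
    split; [lra|]. split; [lra|]. split; [left; lia| ]. lia.
  - simpl in Eq, Ep.
    destruct (cf_qpair al k) as [q0 q0'] eqn:E1.
    destruct (cf_ppair al k) as [p0 p0'] eqn:E2.
    injection Eq as <- <-. injection Ep as <- <-.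
    destruct (IH q0 q0' p0 p0' eq_refl eq_refl) as [I1 [I2 [I3 [I4 I5]]]].
    destruct (a_props al H1 H2 k) as [A1 A2].
    destruct (rem_props al H1 H2 k) as [[R1 R2] _].
    pose proof (rem_S al k) as E.
    assert (Ea : IZR (cf_a al (S k)) = 1 / cf_rem al k - cf_rem al (S k)) by lra.
    repeat split; try lia.
    + rewrite !plus_IZR, !mult_IZR.
      replace ((IZR (cf_a al (S k)) * IZR q0 + IZR q0') * al -
               (IZR (cf_a al (S k)) * IZR p0 + IZR p0'))
        with (IZR (cf_a al (S k)) * (IZR q0 * al - IZR p0) + (IZR q0' * al - IZR p0')) by ring.
      rewrite I1, I2, Ea, UU_Up.
      change (UU al (S k)) with (UU al k * cf_rem al (S k)). rewrite UU_Up.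
      change ((-1) ^ S k) with (-1 * (-1) ^ k). field. lra.
    + change (Up al (S k)) with (UU al k). change ((-1) ^ S k) with (-1 * (-1) ^ k).
      rewrite I1. ring.
Qed.

Lemma Up_pos (al : R) : 0 < al < 1 -> ~ is_rational al -> forall k, 0 < Up al k.
Proof. intros H1 H2 [|k]; simpl; [lra| apply UU_pos; auto]. Qed.

Lemma cf_key (al : R) : 0 < al < 1 -> ~ is_rational al -> forall k,
  exists p u v : Z, (u * p + v * cf_q al k = 1)%Z /\
  IZR (cf_q al k) * al - IZR p = (-1)^k * UU al k /\ 0 < UU al k /\
  UU al k * IZR (cf_q al k) * IZR (cf_a al (S k)) < 1 /\ (1 <= cf_q al k)%Z.
Proof.
  intros H1 H2 k. unfold cf_q.
  destruct (cf_qpair al k) as [q q'] eqn:Eq.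
  destruct (cf_ppair al k) as [p p'] eqn:Ep. simpl.
  destruct (cf_inv al H1 H2 k q q' p p' Eq Ep) as [I1 [I2 [I3 [I4 I5]]]].
  assert (Hw : IZR q * Up al k + IZR q' * UU al k = 1).
  { assert (E : (-1)^k * (IZR q * Up al k + IZR q' * UU al k) = IZR (q * p' - p * q')).
    { rewrite minus_IZR, !mult_IZR.
      replace (IZR p) with (IZR q * al - (-1)^k * UU al k) by lra.
      replace (IZR p') with (IZR q' * al + (-1)^k * Up al k) by lra. ring. }
    assert (Hpos : 0 < IZR q * Up al k + IZR q' * UU al k).
    { pose proof (Up_pos al H1 H2 k). pose proof (UU_pos al H1 H2 k).
      apply IZR_le in I4. apply IZR_le in I5. nra. }
    assert (Ea : Rabs ((-1)^k * (IZR q * Up al k + IZR q' * UU al k)) = 1).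
    { rewrite E. destruct I3 as [-> | ->]; simpl; [apply Rabs_R1|].
      unfold Rabs; destruct Rcase_abs; lra. }
    rewrite Rabs_mult, pow_1_abs, Rabs_pos_eq in Ea by lra. lra. }
  destruct (a_props al H1 H2 k) as [A1 A2].
  destruct (rem_props al H1 H2 k) as [[R1 R2] _].
  exists p.
  destruct I3 as [I3|I3]; [exists (-q')%Z, p'| exists q', (-p')%Z]; (split; [lia|]);
  (split; [exact I1|]); (split; [apply UU_pos; auto|]); (split; [|exact I4]);
  rewrite UU_Up;
  pose proof (Up_pos al H1 H2 k); pose proof (UU_pos al H1 H2 k);
  apply IZR_le in I4; apply IZR_le in I5; apply IZR_le in A1;
  assert (IZR q * Up al k <= 1) by nra;
  replace (Up al k * cf_rem al k * IZR q * IZR (cf_a al (S k)))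
    with ((IZR q * Up al k) * (IZR (cf_a al (S k)) * cf_rem al k)) by ring;
  assert (0 <= IZR (cf_a al (S k)) * cf_rem al k) by nra; nra.
Qed.

Fixpoint lsum (F : nat -> R) (l : list nat) : R :=
  match l with nil => 0 | cons h t => F h + lsum F t end.

Lemma lsum_app F l1 l2 : lsum F (l1 ++ l2) = lsum F l1 + lsum F l2.
Proof. induction l1; simpl; [ring| rewrite IHl1; ring]. Qed.

Lemma lsum_perm F l1 l2 : Permutation l1 l2 -> lsum F l1 = lsum F l2.
Proof. intros H; induction H; simpl; try ring; congruence. Qed.

Lemma lsum_map F f l : lsum F (map f l) = lsum (fun i => F (f i)) l.
Proof. induction l; simpl; [reflexivity| rewrite IHl; reflexivity]. Qed.

Definition sumz (F : nat -> R) (n : nat) : R := lsum F (seq 0 n).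

Lemma sum1_lsum F n : sum1 F n = lsum F (seq 1 n).
Proof.
  induction n; [reflexivity|]. rewrite seq_S, lsum_app; simpl. rewrite IHn. ring.
Qed.

Lemma sumz_S F n : sumz F (S n) = sumz F n + F n.
Proof. unfold sumz. rewrite seq_S, lsum_app; simpl. ring. Qed.

Lemma sumz_plus F G n : sumz (fun j => F j + G j) n = sumz F n + sumz G n.
Proof. induction n; [unfold sumz; simpl; ring|]. rewrite !sumz_S, IHn. ring. Qed.

Lemma sumz_scal c F n : sumz (fun j => c * F j) n = c * sumz F n.
Proof. induction n; [unfold sumz; simpl; ring|]. rewrite !sumz_S, IHn. ring. Qed.

Lemma sumz_ext F G n : (forall j, (j < n)%nat -> F j = G j) -> sumz F n = sumz G n.
Proof.
  induction n; intros H; [reflexivity|]. rewrite !sumz_S, IHn by (intros; apply H; lia).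
  rewrite H by lia. reflexivity.
Qed.

Lemma sumz_const c n : sumz (fun _ => c) n = INR n * c.
Proof. induction n; [unfold sumz; simpl; ring|]. rewrite sumz_S, IHn, S_INR. ring. Qed.

Lemma sumz_sum1 (F : nat -> nat -> R) n nu :
  sumz (fun j => sum1 (fun i => F i j) nu) n = sum1 (fun i => sumz (F i) n) nu.
Proof.
  induction nu; simpl.
  - rewrite sumz_const. ring.
  - rewrite sumz_plus, IHnu. reflexivity.
Qed.

Lemma sumz_id n : sumz INR n = INR n * (INR n - 1) / 2.
Proof. induction n; [unfold sumz; simpl; field|]. rewrite sumz_S, IHn, S_INR. field. Qed.

Definition ltr (j K : nat) : R := if Nat.ltb j K then 1 else 0.
Definition ler (j K : nat) : R := if Nat.leb j K then 1 else 0.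

Lemma sumz_ltr K n : (K <= n)%nat -> sumz (fun j => ltr j K) n = INR K.
Proof.
  induction n; intros H.
  - assert (K = 0)%nat by lia. subst. reflexivity.
  - rewrite sumz_S. destruct (Nat.eq_dec K (S n)).
    + subst. rewrite sumz_ext with (G := fun _ => 1).
      * rewrite sumz_const. unfold ltr. rewrite (proj2 (Nat.ltb_lt n (S n))) by lia.
        rewrite S_INR; ring.
      * intros j Hj. unfold ltr. rewrite (proj2 (Nat.ltb_lt j (S n))) by lia. reflexivity.
    + rewrite IHn by lia. unfold ltr. rewrite (proj2 (Nat.ltb_ge n K)) by lia. ring.
Qed.

Lemma sumz_ler K n : (K < n)%nat -> sumz (fun j => ler j K) n = INR K + 1.
Proof.
  intros H. rewrite sumz_ext with (G := fun j => ltr j (S K)).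
  - rewrite sumz_ltr by lia. rewrite S_INR; ring.
  - intros j _. unfold ler, ltr. destruct (Nat.leb j K) eqn:E1; destruct (Nat.ltb j (S K)) eqn:E2;
    try reflexivity.
    + apply Nat.leb_le in E1. apply Nat.ltb_ge in E2. lia.
    + apply Nat.leb_gt in E1. apply Nat.ltb_lt in E2. lia.
Qed.

Lemma sumz_eq0 n : (1 <= n)%nat -> sumz (fun j => if Nat.eqb j 0 then 1 else 0) n = 1.
Proof.
  intros H. rewrite sumz_ext with (G := fun j => ler j 0).
  - rewrite sumz_ler by lia. simpl; ring.
  - intros j _. unfold ler. destruct j; reflexivity.
Qed.

Lemma sum1_add F a b : sum1 F (a + b) = sum1 F a + sum1 (fun m => F (a + m)%nat) b.
Proof.
  induction b; simpl. rewrite Nat.add_0_r; ring.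
  rewrite Nat.add_succ_r. simpl. rewrite IHb. ring.
Qed.

Lemma sum1_plus F G n : sum1 (fun i => F i + G i) n = sum1 F n + sum1 G n.
Proof. induction n; simpl; [ring| rewrite IHn; ring]. Qed.

Lemma sum1_scal c F n : sum1 (fun i => c * F i) n = c * sum1 F n.
Proof. induction n; simpl; [ring| rewrite IHn; ring]. Qed.

Lemma sum1_id n : sum1 INR n = INR n * (INR n + 1) / 2.
Proof. induction n; [simpl; field|]. change (sum1 INR (S n)) with (sum1 INR n + INR (S n)). rewrite IHn, S_INR. field. Qed.

Lemma sum1_nonneg F n : (forall i, (1 <= i <= n)%nat -> 0 <= F i) -> 0 <= sum1 F n.
Proof.
  induction n; intros H; simpl; [lra|].
  assert (0 <= sum1 F n) by (apply IHn; intros; apply H; lia).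
  assert (0 <= F (S n)) by (apply H; lia). lra.
Qed.

Definition grid_ok (nu : nat) (x : nat -> R) (L : nat) (a : nat -> nat) : Prop :=
  (1 <= L)%nat /\
  (forall i, (i <= nu)%nat -> xx x i = INR (a i) / INR L /\ (a i < L)%nat) /\
  (forall i, (1 <= i <= nu)%nat -> xx x (i - 1) <= xx x i).

Lemma cmpA J Q Aa Lr : 0 < Q -> 0 < Lr -> J * Lr + 1 <= Aa * Q -> J / Q + 1 / (Q * Lr) <= Aa / Lr.
Proof.
  intros HQ HL H.
  replace (J / Q + 1 / (Q * Lr)) with ((J * Lr + 1) * / (Q * Lr)) by (field; lra).
  replace (Aa / Lr) with ((Aa * Q) * / (Q * Lr)) by (field; lra).
  apply Rmult_le_compat_r; [|exact H].
  apply Rlt_le, Rinv_0_lt_compat, Rmult_lt_0_compat; auto.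
Qed.

Lemma cmpB J Q Aa Lr : 0 < Q -> 0 < Lr -> J * Lr <= Aa * Q -> J / Q <= Aa / Lr.
Proof.
  intros HQ HL H.
  replace (J / Q) with ((J * Lr) * / (Q * Lr)) by (field; lra).
  replace (Aa / Lr) with ((Aa * Q) * / (Q * Lr)) by (field; lra).
  apply Rmult_le_compat_r; [|exact H].
  apply Rlt_le, Rinv_0_lt_compat, Rmult_lt_0_compat; auto.
Qed.

Lemma ind_split u v y : u <= v ->
  ind_Ico u v y = (if Rlt_dec y v then 1 else 0) - (if Rlt_dec y u then 1 else 0).
Proof.
  intros H. unfold ind_Ico.
  destruct (Rle_dec u y); destruct (Rlt_dec y v); destruct (Rlt_dec y u); lra.
Qed.

Lemma INRpos n : (1 <= n)%nat -> 0 < INR n.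
Proof. intros H. apply lt_0_INR. lia. Qed.

Lemma lt_plus (j q m s L a : nat) (d : R) :
  (1 <= L)%nat -> (1 <= q)%nat -> (q + s = m * L)%nat -> (s <= 1)%nat -> (a < L)%nat ->
  0 <= d < 1 / (INR q * INR L) ->
  (if Rlt_dec (INR j / INR q + d) (INR a / INR L) then 1 else 0) = ltr j (a * m).
Proof.
  intros HL Hq Hm Hs Ha Hd. pose proof (INRpos L HL). pose proof (INRpos q Hq).
  unfold ltr. destruct (Nat.ltb j (a * m)) eqn:E.
  - apply Nat.ltb_lt in E. assert (j * L + 1 <= a * q)%nat by nia.
    apply le_INR in H1. rewrite plus_INR, !mult_INR in H1. simpl in H1.
    pose proof (cmpA (INR j) (INR q) (INR a) (INR L) H0 H H1).
    destruct Rlt_dec; [reflexivity| lra].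
  - apply Nat.ltb_ge in E. assert (a * q <= j * L)%nat by nia.
    apply le_INR in H1. rewrite !mult_INR in H1.
    pose proof (cmpB (INR a) (INR L) (INR j) (INR q) H H0 ltac:(lra)).
    destruct Rlt_dec; [lra| reflexivity].
Qed.

Lemma lt_minus (j q m s L a : nat) (d : R) :
  (1 <= L)%nat -> (1 <= q)%nat -> (q = m * L + s)%nat -> (s <= 1)%nat -> (a < L)%nat ->
  - (1 / (INR q * INR L)) < d < 0 ->
  (if Rlt_dec (INR j / INR q + d) (INR a / INR L) then 1 else 0) = ler j (a * m).
Proof.
  intros HL Hq Hm Hs Ha Hd. pose proof (INRpos L HL). pose proof (INRpos q Hq).
  unfold ler. destruct (Nat.leb j (a * m)) eqn:E.
  - apply Nat.leb_le in E. assert (j * L <= a * q)%nat by nia.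
    apply le_INR in H1. rewrite !mult_INR in H1.
    pose proof (cmpB (INR j) (INR q) (INR a) (INR L) H0 H H1).
    destruct Rlt_dec; [reflexivity| lra].
  - apply Nat.leb_gt in E. assert (a * q + 1 <= j * L)%nat by nia.
    apply le_INR in H1. rewrite plus_INR, !mult_INR in H1. simpl in H1.
    pose proof (cmpA (INR a) (INR L) (INR j) (INR q) H H0 H1).
    rewrite (Rmult_comm (INR L)) in H2.
    destruct Rlt_dec; [lra| reflexivity].
Qed.

Definition Vp nu (x A : nat -> R) (a : nat -> nat) (m q : nat) (j : nat) : R :=
  (INR j / INR q - 1/2) * sum1 A nu +
  sum1 (fun i => cc A i * (ltr j (a i * m) - ltr j (a (i-1)%nat * m) - (xx x i - xx x (i-1)))) nu.

Definition Vm nu (x A : nat -> R) (a : nat -> nat) (m q : nat) (j : nat) : R :=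
  (INR j / INR q + (if Nat.eqb j 0 then 1 else 0) - 1/2) * sum1 A nu +
  sum1 (fun i => cc A i * (ler j (a i * m) - ler j (a (i-1)%nat * m) - (xx x i - xx x (i-1)))) nu.

Lemma g_plus nu x A L a m q s j d :
  grid_ok nu x L a -> (1 <= q)%nat -> (q + s = m * L)%nat -> (s <= 1)%nat -> (j < q)%nat ->
  0 <= d < 1 / (INR q * INR L) ->
  gfun nu x A (INR j / INR q + d) = Vp nu x A a m q j + sum1 A nu * d.
Proof.
  intros [HL [Hg Ho]] Hq Hm Hs Hj Hd.
  pose proof (INRpos L HL). pose proof (INRpos q Hq).
  assert (Hy : 0 <= INR j / INR q + d < 1).
  { split. - assert (0 <= INR j / INR q) by (apply Rmult_le_pos; [apply pos_INR| apply Rlt_le, Rinv_0_lt_compat; lra]). lra.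
    - assert (j * L + 1 <= L * q)%nat by nia. apply le_INR in H1. rewrite plus_INR, !mult_INR in H1. simpl in H1.
      pose proof (cmpA _ _ _ _ H0 H H1). replace (INR L / INR L) with 1 in H2 by (field; lra). lra. }
  unfold gfun, Vp. rewrite frac_id by exact Hy.
  rewrite (sum1_ext (fun i => cc A i * (ind_Ico (xx x (i - 1)) (xx x i) (INR j / INR q + d) - (xx x i - xx x (i - 1))))
     (fun i => cc A i * (ltr j (a i * m) - ltr j (a (i-1)%nat * m) - (xx x i - xx x (i-1))))).
  - ring.
  - intros i Hi. f_equal. f_equal.
    rewrite ind_split by (apply Ho; auto).
    destruct (Hg i ltac:(lia)) as [E1 A1]. destruct (Hg (i-1)%nat ltac:(lia)) as [E2 A2].
    rewrite E1, E2. rewrite (lt_plus j q m s L (a i) d), (lt_plus j q m s L (a (i-1)%nat) d); auto.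
Qed.

Lemma g_minus nu x A L a m q s j d :
  grid_ok nu x L a -> (1 <= q)%nat -> (q = m * L + s)%nat -> (s <= 1)%nat -> (j < q)%nat ->
  - (1 / (INR q * INR L)) < d < 0 ->
  gfun nu x A (INR j / INR q + d) = Vm nu x A a m q j + sum1 A nu * d.
Proof.
  intros [HL [Hg Ho]] Hq Hm Hs Hj Hd.
  pose proof (INRpos L HL). pose proof (INRpos q Hq).
  assert (Hsm : 1 / (INR q * INR L) <= 1 / INR q).
  { apply Rmult_le_compat_l; [lra|]. apply Rinv_le_contravar; [lra|].
    apply le_INR in HL. simpl in HL. nra. }
  assert (Hql : 0 < 1 / (INR q * INR L)) by (apply Rdiv_lt_0_compat; [lra| nra]).
  destruct (Nat.eq_dec j 0) as [Hj0|Hj0].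
  - subst j. unfold gfun, Vm. simpl INR. assert (Hq1 : 1 / INR q <= 1).
    { unfold Rdiv; rewrite Rmult_1_l. rewrite <- Rinv_1. apply Rinv_le_contravar; [lra|].
      apply le_INR in Hq; simpl in Hq; lra. }
    rewrite (frac_eq _ (-1)) by (unfold Rdiv; rewrite Rmult_0_l; lra).
    rewrite (sum1_ext (fun i => cc A i * (ind_Ico (xx x (i - 1)) (xx x i) (0 / INR q + d - IZR (-1)) - (xx x i - xx x (i - 1))))
     (fun i => cc A i * (ler 0 (a i * m) - ler 0 (a (i-1)%nat * m) - (xx x i - xx x (i-1))))).
    + simpl Nat.eqb. unfold Rdiv. rewrite Rmult_0_l. ring.
    + intros i Hi. f_equal. f_equal.
      unfold ler. simpl Nat.leb.
      destruct (Hg i ltac:(lia)) as [E1 A1]. destruct (Hg (i-1)%nat ltac:(lia)) as [E2 A2].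
      assert (xx x i < 1 + d).
      { rewrite E1. assert (a i + 1 <= L)%nat by lia. apply le_INR in H1. rewrite plus_INR in H1; simpl in H1.
        assert (INR (a i) / INR L <= 1 - 1 / INR L).
        { replace (1 - 1 / INR L) with ((INR L - 1) / INR L) by (field; lra).
          unfold Rdiv; apply Rmult_le_compat_r; [apply Rlt_le, Rinv_0_lt_compat; lra| lra]. }
        assert (1 / (INR q * INR L) <= 1 / INR L).
        { apply Rmult_le_compat_l; [lra|]. apply Rinv_le_contravar; [lra|].
          apply le_INR in Hq. simpl in Hq. nra. }
        lra. }
      assert (Z0 : 0 / INR q = 0) by (unfold Rdiv; ring).
      unfold ind_Ico. rewrite Z0.
      destruct (Rle_dec (xx x (i-1)) (0 + d - IZR (-1))); destruct (Rlt_dec (0 + d - IZR (-1)) (xx x i));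
        simpl in *; lra.
  - assert (Hy : 0 <= INR j / INR q + d < 1).
    { split.
      - assert (1 / INR q <= INR j / INR q).
        { unfold Rdiv. apply Rmult_le_compat_r; [apply Rlt_le, Rinv_0_lt_compat; lra|].
          pose proof (le_INR 1 j ltac:(lia)) as HH; simpl in HH; lra. } lra.
      - assert (INR j / INR q < 1).
        { apply (Rmult_lt_reg_r (INR q)); [lra|]. unfold Rdiv. rewrite Rmult_assoc, Rinv_l by lra.
          rewrite Rmult_1_r, Rmult_1_l. apply lt_INR. lia. } lra. }
    unfold gfun, Vm. rewrite frac_id by exact Hy.
    rewrite (sum1_ext (fun i => cc A i * (ind_Ico (xx x (i - 1)) (xx x i) (INR j / INR q + d) - (xx x i - xx x (i - 1))))
     (fun i => cc A i * (ler j (a i * m) - ler j (a (i-1)%nat * m) - (xx x i - xx x (i-1))))).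
    + rewrite (proj2 (Nat.eqb_neq j 0) Hj0). ring.
    + intros i Hi. f_equal. f_equal.
      rewrite ind_split by (apply Ho; auto).
      destruct (Hg i ltac:(lia)) as [E1 A1]. destruct (Hg (i-1)%nat ltac:(lia)) as [E2 A2].
      rewrite E1, E2. rewrite (lt_minus j q m s L (a i) d), (lt_minus j q m s L (a (i-1)%nat) d); auto.
Qed.

Definition Cc nu (x A : nat -> R) : R := sum1 (fun i => cc A i * (xx x i - xx x (i - 1))) nu.

Lemma sum_saw_p S q : (1 <= q)%nat -> sumz (fun j => (INR j / INR q - 1/2) * S) q = - S / 2.
Proof.
  intros Hq. pose proof (INRpos q Hq).
  rewrite (sumz_ext _ (fun j => (S / INR q) * INR j + (- (S/2)))) by (intros; field; lra).
  rewrite sumz_plus, sumz_scal, sumz_id, sumz_const. field. lra.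
Qed.

Lemma sum_saw_m S q : (1 <= q)%nat ->
  sumz (fun j => (INR j / INR q + (if Nat.eqb j 0 then 1 else 0) - 1/2) * S) q = S / 2.
Proof.
  intros Hq. pose proof (INRpos q Hq).
  rewrite (sumz_ext _ (fun j => (S / INR q) * INR j + (S * (if Nat.eqb j 0 then 1 else 0) + (- (S/2))))) by (intros; field; lra).
  rewrite !sumz_plus, !sumz_scal, sumz_id, sumz_const, sumz_eq0 by auto. field. lra.
Qed.

Lemma sum_Vp nu x A L a m q s :
  grid_ok nu x L a -> (1 <= q)%nat -> (q + s = m * L)%nat -> (s <= 1)%nat ->
  sumz (Vp nu x A a m q) q = - sum1 A nu / 2 + INR s * Cc nu x A.
Proof.
  intros [HL [Hg Ho]] Hq Hm Hs. pose proof (INRpos L HL). pose proof (INRpos q Hq).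
  unfold Vp. rewrite sumz_plus, sum_saw_p by auto. f_equal.
  rewrite (sumz_sum1 (fun i j => cc A i * (ltr j (a i * m) - ltr j (a (i - 1)%nat * m) - (xx x i - xx x (i - 1))))).
  unfold Cc. rewrite <- sum1_scal. apply sum1_ext. intros i Hi.
  destruct (Hg i ltac:(lia)) as [E1 A1]. destruct (Hg (i-1)%nat ltac:(lia)) as [E2 A2].
  rewrite (sumz_ext _ (fun j => cc A i * ltr j (a i * m) + ((- cc A i) * ltr j (a (i-1)%nat * m) + (- (cc A i * (xx x i - xx x (i - 1)))))))
    by (intros; ring).
  rewrite !sumz_plus, !sumz_scal, sumz_const, !sumz_ltr by nia.
  assert (Eq : INR q = INR m * INR L - INR s).
  { apply (f_equal INR) in Hm. rewrite plus_INR, mult_INR in Hm. lra. }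
  rewrite E1, E2, !mult_INR, Eq. field. lra.
Qed.

Lemma sum_Vm nu x A L a m q s :
  grid_ok nu x L a -> (1 <= q)%nat -> (q = m * L + s)%nat -> (s <= 1)%nat ->
  sumz (Vm nu x A a m q) q = sum1 A nu / 2 - INR s * Cc nu x A.
Proof.
  intros [HL [Hg Ho]] Hq Hm Hs. pose proof (INRpos L HL). pose proof (INRpos q Hq).
  unfold Vm. rewrite sumz_plus, sum_saw_m by auto. unfold Rminus. f_equal.
  rewrite (sumz_sum1 (fun i j => cc A i * (ler j (a i * m) - ler j (a (i - 1)%nat * m) - (xx x i - xx x (i - 1))))).
  unfold Cc. rewrite Ropp_mult_distr_l, <- sum1_scal. apply sum1_ext. intros i Hi.
  destruct (Hg i ltac:(lia)) as [E1 A1]. destruct (Hg (i-1)%nat ltac:(lia)) as [E2 A2].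
  rewrite (sumz_ext _ (fun j => cc A i * ler j (a i * m) + ((- cc A i) * ler j (a (i-1)%nat * m) + (- (cc A i * (xx x i - xx x (i - 1)))))))
    by (intros; ring).
  rewrite !sumz_plus, !sumz_scal, sumz_const, !sumz_ler by nia.
  assert (Eq : INR q = INR m * INR L + INR s).
  { apply (f_equal INR) in Hm. rewrite plus_INR, mult_INR in Hm. lra. }
  rewrite E1, E2, !mult_INR, Eq. field. lra.
Qed.

Definition jn (p : Z) (q n : nat) : nat := Z.to_nat ((Z.of_nat n * p) mod Z.of_nat q).

Lemma jn_lt p q n : (1 <= q)%nat -> (jn p q n < q)%nat.
Proof.
  intros Hq. unfold jn. pose proof (Z.mod_pos_bound (Z.of_nat n * p) (Z.of_nat q) ltac:(lia)). lia.
Qed.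

Lemma jn_period p q t n : (1 <= q)%nat -> jn p q (t * q + n) = jn p q n.
Proof.
  intros Hq. unfold jn. f_equal.
  replace (Z.of_nat (t * q + n) * p)%Z with (Z.of_nat n * p + (Z.of_nat t * p) * Z.of_nat q)%Z by lia.
  apply Z.mod_add. lia.
Qed.

Lemma gfun_shift nu x A (k : Z) y : gfun nu x A (IZR k + y) = gfun nu x A y.
Proof. unfold gfun. rewrite (Rplus_comm (IZR k) y), frac_shift. reflexivity. Qed.

Lemma point_decomp (al e : R) (q : nat) (p : Z) (n : nat) : (1 <= q)%nat ->
  INR q * al = IZR p + e ->
  INR n * al = IZR ((Z.of_nat n * p) / Z.of_nat q) + (INR (jn p q n) / INR q + INR n * e / INR q).
Proof.
  intros Hq He. pose proof (INRpos q Hq) as Hq'.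
  unfold jn. pose proof (Z.mod_pos_bound (Z.of_nat n * p) (Z.of_nat q) ltac:(lia)).
  rewrite (INR_IZR_INZ (Z.to_nat _)), Z2Nat.id by lia.
  pose proof (Z.div_mod (Z.of_nat n * p) (Z.of_nat q) ltac:(lia)) as E.
  apply (f_equal IZR) in E. rewrite plus_IZR, !mult_IZR in E. rewrite <- !INR_IZR_INZ in E.
  assert (IZR ((Z.of_nat n * p) mod Z.of_nat q) = INR n * IZR p - INR q * IZR (Z.of_nat n * p / Z.of_nat q)) by lra.
  rewrite H0. replace al with ((IZR p + e) / INR q) by (rewrite <- He; field; lra). field. lra.
Qed.

Lemma sum_periodic (V : nat -> R) p q b : (1 <= q)%nat ->
  sum1 (fun n => V (jn p q n)) (b * q) = INR b * sum1 (fun n => V (jn p q n)) q.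
Proof.
  intros Hq. induction b.
  - simpl. ring.
  - rewrite Nat.mul_succ_l, sum1_add, IHb, S_INR.
    rewrite (sum1_ext (fun m => V (jn p q (b * q + m))) (fun n => V (jn p q n))).
    + ring.
    + intros i _. rewrite jn_period; auto.
Qed.

Lemma perm_sum (V : nat -> R) p q u v : (1 <= q)%nat -> (u * p + v * Z.of_nat q = 1)%Z ->
  sum1 (fun n => V (jn p q n)) q = sumz V q.
Proof.
  intros Hq Hb. rewrite sum1_lsum. unfold sumz.
  rewrite <- (lsum_map V (jn p q)). apply lsum_perm.
  apply NoDup_Permutation_bis.
  - apply FinFun.Injective_map_NoDup_in; [|apply seq_NoDup].
    intros n1 n2 H1 H2 E. apply in_seq in H1. apply in_seq in H2.
    unfold jn in E.
    pose proof (Z.mod_pos_bound (Z.of_nat n1 * p) (Z.of_nat q) ltac:(lia)).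
    pose proof (Z.mod_pos_bound (Z.of_nat n2 * p) (Z.of_nat q) ltac:(lia)).
    apply Z2Nat.inj in E; try lia.
    pose proof (Z.div_mod (Z.of_nat n1 * p) (Z.of_nat q) ltac:(lia)) as D1.
    pose proof (Z.div_mod (Z.of_nat n2 * p) (Z.of_nat q) ltac:(lia)) as D2.
    set (k := ((Z.of_nat n1 * p) / Z.of_nat q - (Z.of_nat n2 * p) / Z.of_nat q)%Z).
    assert (Hk : ((Z.of_nat n1 - Z.of_nat n2) * p = Z.of_nat q * k)%Z) by (unfold k; lia).
    assert (Hc : (Z.of_nat n1 - Z.of_nat n2 = Z.of_nat q * (u * k + v * (Z.of_nat n1 - Z.of_nat n2)))%Z).
    { replace (Z.of_nat n1 - Z.of_nat n2)%Z with ((Z.of_nat n1 - Z.of_nat n2) * (u * p + v * Z.of_nat q))%Z at 1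
        by (rewrite Hb; ring).
      replace ((Z.of_nat n1 - Z.of_nat n2) * (u * p + v * Z.of_nat q))%Z
        with (u * ((Z.of_nat n1 - Z.of_nat n2) * p) + v * (Z.of_nat n1 - Z.of_nat n2) * Z.of_nat q)%Z by ring.
      rewrite Hk. ring. }
    set (c := (u * k + v * (Z.of_nat n1 - Z.of_nat n2))%Z) in Hc. clearbody c.
    assert (B1 : (Z.of_nat q * c < Z.of_nat q * 1)%Z) by lia.
    assert (B2 : (Z.of_nat q * (-1) < Z.of_nat q * c)%Z) by lia.
    apply Z.mul_lt_mono_pos_l in B1; [|lia]. apply Z.mul_lt_mono_pos_l in B2; [|lia].
    assert (c = 0)%Z by lia. subst c. lia.
  - rewrite length_map, !length_seq. lia.
  - intros y Hy. apply in_map_iff in Hy. destruct Hy as [n [<- _]].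
    apply in_seq. pose proof (jn_lt p q n Hq). lia.
Qed.

Lemma SN_formula nu x A al q p u v e (V : nat -> R) b :
  (1 <= q)%nat -> (u * p + v * Z.of_nat q = 1)%Z -> INR q * al = IZR p + e ->
  RInt (gfun nu x A) 0 1 = 0 ->
  (forall n j, (1 <= n <= b * q)%nat -> (j < q)%nat ->
     gfun nu x A (INR j / INR q + INR n * e / INR q) = V j + sum1 A nu * (INR n * e / INR q)) ->
  SN (gfun nu x A) al (b * q) =
    INR b * sumz V q + sum1 A nu * e / INR q * (INR (b * q) * (INR (b * q) + 1) / 2).
Proof.
  intros Hq Hb He HI H. pose proof (INRpos q Hq).
  unfold SN. rewrite HI.
  rewrite (sum1_ext _ (fun n => V (jn p q n) + (sum1 A nu * e / INR q) * INR n)).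
  - rewrite sum1_plus, sum_periodic, (perm_sum V p q u v), sum1_scal, sum1_id by auto. ring.
  - intros n Hn. rewrite (point_decomp al e q p n Hq He), gfun_shift.
    rewrite H by (auto; apply jn_lt; auto). field. lra.
Qed.

Lemma core_plus nu x A L a al q m s p u v e b :
  grid_ok nu x L a -> RInt (gfun nu x A) 0 1 = 0 ->
  (1 <= q)%nat -> (q + s = m * L)%nat -> (s <= 1)%nat ->
  (u * p + v * Z.of_nat q = 1)%Z -> INR q * al = IZR p + e -> 0 < e ->
  INR b * e < 1 / (INR q * INR L) ->
  SN (gfun nu x A) al (b * q) =
    INR b * (- sum1 A nu / 2 + INR s * Cc nu x A)
    + sum1 A nu * e / INR q * (INR (b * q) * (INR (b * q) + 1) / 2).
Proof.
  intros Hg HI Hq Hm Hs Hb He Hep Hbe.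
  pose proof (INRpos q Hq).
  rewrite <- (sum_Vp nu x A L a m q s) by auto.
  apply (SN_formula nu x A al q p u v e (Vp nu x A a m q) b); auto.
  intros n j Hn Hj. apply (g_plus nu x A L a m q s j); auto.
  assert (INR n <= INR b * INR q) by (rewrite <- mult_INR; apply le_INR; lia).
  assert (0 <= INR n) by apply pos_INR.
  split.
  - apply Rmult_le_pos; [nra| apply Rlt_le, Rinv_0_lt_compat; lra].
  - assert (INR n * e / INR q <= INR b * e).
    { apply (Rmult_le_reg_r (INR q)); [lra|]. replace (INR n * e / INR q * INR q) with (INR n * e) by (field; lra). nra. }
    lra.
Qed.

Lemma core_minus nu x A L a al q m s p u v e b :
  grid_ok nu x L a -> RInt (gfun nu x A) 0 1 = 0 ->
  (1 <= q)%nat -> (q = m * L + s)%nat -> (s <= 1)%nat ->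
  (u * p + v * Z.of_nat q = 1)%Z -> INR q * al = IZR p + e -> e < 0 ->
  INR b * (- e) < 1 / (INR q * INR L) ->
  SN (gfun nu x A) al (b * q) =
    INR b * (sum1 A nu / 2 - INR s * Cc nu x A)
    + sum1 A nu * e / INR q * (INR (b * q) * (INR (b * q) + 1) / 2).
Proof.
  intros Hg HI Hq Hm Hs Hb He Hep Hbe.
  pose proof (INRpos q Hq).
  rewrite <- (sum_Vm nu x A L a m q s) by auto.
  apply (SN_formula nu x A al q p u v e (Vm nu x A a m q) b); auto.
  intros n j Hn Hj. apply (g_minus nu x A L a m q s j); auto.
  assert (INR n <= INR b * INR q) by (rewrite <- mult_INR; apply le_INR; lia).
  assert (1 <= INR n) by (pose proof (le_INR 1 n ltac:(lia)); simpl in *; lra).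
  split.
  - assert (INR b * e <= INR n * e / INR q).
    { apply (Rmult_le_reg_r (INR q)); [lra|]. replace (INR n * e / INR q * INR q) with (INR n * e) by (field; lra). nra. }
    lra.
  - assert (INR n * e < 0) by nra.
    unfold Rdiv. apply Rmult_neg_pos; [lra| apply Rinv_0_lt_compat; lra].
Qed.

Lemma drift_bound (Sv e Q B aK c kap : R) :
  1 <= Q -> 0 <= B -> 0 < aK -> Rabs e * Q * aK < 1 -> B <= c * aK ->
  0 < kap -> c <= kap -> 1 / aK <= kap ->
  Rabs (Sv * e / Q * (B * Q * (B * Q + 1) / 2)) <= Rabs Sv * B * 2 * kap / 2.
Proof.
  intros HQ HB HaK He Hb Hk Hc Ha.
  assert (E : Rabs (Sv * e / Q * (B * Q * (B * Q + 1) / 2)) = Rabs Sv * Rabs e * B * (B * Q + 1) / 2).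
  { replace (Sv * e / Q * (B * Q * (B * Q + 1) / 2)) with (Sv * e * (B * (B * Q + 1) / 2)) by (field; lra).
    rewrite (Rabs_mult (Sv * e)), (Rabs_pos_eq (B * (B * Q + 1) / 2)) by (apply Rmult_le_pos; [nra| lra]).
    rewrite Rabs_mult. field. }
  rewrite E.
  assert (H1 : Rabs e * (B * Q + 1) <= Rabs e * Q * (B + 1)).
  { pose proof (Rabs_pos e). nra. }
  assert (H2 : Rabs e * Q * (B + 1) <= (B + 1) / aK).
  { assert (Rabs e * Q <= 1 / aK).
    { apply (Rmult_le_reg_r aK); [lra|]. replace (1 / aK * aK) with 1 by (field; lra). lra. }
    assert (0 <= B + 1) by lra. nra. }
  assert (H3 : (B + 1) / aK <= 2 * kap).
  { replace ((B + 1) / aK) with (B / aK + 1 / aK) by (field; lra).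
    assert (B / aK <= c).
    { apply (Rmult_le_reg_r aK); [lra|]. replace (B / aK * aK) with B by (field; lra). lra. }
    lra. }
  pose proof (Rabs_pos Sv).
  assert (Rabs e * (B * Q + 1) <= 2 * kap) by lra.
  assert (Rabs Sv * B * (Rabs e * (B * Q + 1)) <= Rabs Sv * B * (2 * kap)).
  { apply Rmult_le_compat_l; [nra| lra]. }
  replace (Rabs Sv * Rabs e * B * (B * Q + 1) / 2) with (Rabs Sv * B * (Rabs e * (B * Q + 1)) / 2) by field.
  lra.
Qed.

Lemma par1 K : (Z.of_nat K mod 2 = 1 mod 2)%Z -> exists t, K = S (2 * t).
Proof. intros H. change (1 mod 2)%Z with 1%Z in H.
  pose proof (Z.div_mod (Z.of_nat K) 2 ltac:(lia)).
  exists (Z.to_nat (Z.of_nat K / 2)). lia.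
Qed.

Lemma par0 K : (Z.of_nat K mod 2 = 0 mod 2)%Z -> (1 <= K)%nat -> exists t, K = S (S (2 * t)).
Proof. intros H HK. change (0 mod 2)%Z with 0%Z in H.
  pose proof (Z.div_mod (Z.of_nat K) 2 ltac:(lia)).
  exists (Z.to_nat (Z.of_nat K / 2) - 1)%nat. lia.
Qed.

Lemma cong_neg (Q : Z) (L s : nat) : (1 <= L)%nat -> (1 <= Q)%Z ->
  (Q mod Z.of_nat L = (- Z.of_nat s) mod Z.of_nat L)%Z ->
  exists m, (Z.to_nat Q + s = m * L)%nat.
Proof.
  intros HL HQ H.
  assert (E : ((Q + Z.of_nat s) mod Z.of_nat L = 0)%Z).
  { rewrite Zplus_mod, H, <- Zplus_mod. replace (- Z.of_nat s + Z.of_nat s)%Z with 0%Z by ring.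
    apply Z.mod_0_l. lia. }
  pose proof (Z.div_mod (Q + Z.of_nat s) (Z.of_nat L) ltac:(lia)) as D.
  rewrite E in D.
  assert (0 <= (Q + Z.of_nat s) / Z.of_nat L)%Z by (apply Z.div_pos; lia).
  exists (Z.to_nat ((Q + Z.of_nat s) / Z.of_nat L)). lia.
Qed.

Lemma cong_pos (Q : Z) (L s : nat) : (1 <= L)%nat -> (1 <= Q)%Z -> (s <= 1)%nat ->
  (Q mod Z.of_nat L = (Z.of_nat s) mod Z.of_nat L)%Z ->
  exists m, (Z.to_nat Q = m * L + s)%nat.
Proof.
  intros HL HQ Hs H.
  assert (E : ((Q - Z.of_nat s) mod Z.of_nat L = 0)%Z).
  { rewrite Zminus_mod, H, <- Zminus_mod. replace (Z.of_nat s - Z.of_nat s)%Z with 0%Z by ring.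
    apply Z.mod_0_l. lia. }
  pose proof (Z.div_mod (Q - Z.of_nat s) (Z.of_nat L) ltac:(lia)) as D.
  rewrite E in D.
  assert (0 <= (Q - Z.of_nat s) / Z.of_nat L)%Z by (apply Z.div_pos; lia).
  exists (Z.to_nat ((Q - Z.of_nat s) / Z.of_nat L)). lia.
Qed.

Lemma common_den (n : nat) (y : nat -> R) :
  (forall i, (1 <= i <= n)%nat -> is_rational (y i)) ->
  exists L : nat, (1 <= L)%nat /\ forall i, (1 <= i <= n)%nat -> exists z : Z, y i * INR L = IZR z.
Proof.
  induction n as [|n IH]; intros H.
  - exists 1%nat. split; [lia| intros; lia].
  - destruct IH as [L [HL HLz]]; [intros; apply H; lia|].
    destruct (H (S n) ltac:(lia)) as [P [Q [HQ E]]].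
    assert (HQ' : IZR Q <> 0) by (apply not_0_IZR; auto).
    exists (L * Z.to_nat (Z.abs Q))%nat. split; [lia|].
    assert (EQ : INR (Z.to_nat (Z.abs Q)) = IZR (Z.abs Q)) by (rewrite INR_IZR_INZ, Z2Nat.id; [reflexivity| lia]).
    intros i Hi. destruct (Nat.eq_dec i (S n)) as [->|Hne].
    + rewrite E, mult_INR, EQ. destruct (Z_lt_le_dec 0 Q).
      * rewrite Z.abs_eq by lia. exists (P * Z.of_nat L)%Z. rewrite mult_IZR, <- INR_IZR_INZ. field; auto.
      * rewrite Z.abs_neq by lia. exists (- P * Z.of_nat L)%Z. rewrite !mult_IZR, !opp_IZR, <- INR_IZR_INZ.
        field; auto.
    + destruct (HLz i ltac:(lia)) as [z Hz]. exists (z * Z.abs Q)%Z.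
      rewrite mult_INR, EQ, mult_IZR, <- Hz. ring.
Qed.

Lemma chain_lo (nu : nat) (x : nat -> R) :
  (forall i, (1 <= i < nu)%nat -> x i < x (S i)) ->
  forall i, (1 <= i <= nu)%nat -> x 1%nat <= x i.
Proof.
  intros H i. induction i as [|i IH]; intros Hi; [lia|].
  destruct (Nat.eq_dec i 0) as [->|]; [lra|].
  assert (x i < x (S i)) by (apply H; lia). assert (x 1%nat <= x i) by (apply IH; lia). lra.
Qed.

Lemma chain_hi (nu : nat) (x : nat -> R) :
  (forall i, (1 <= i < nu)%nat -> x i < x (S i)) ->
  forall d i, (1 <= i)%nat -> (i + d = nu)%nat -> x i <= x nu.
Proof.
  intros H d. induction d as [|d IH]; intros i Hi E.
  - replace nu with i by lia. lra.
  - assert (x i < x (S i)) by (apply H; lia). assert (x (S i) <= x nu) by (apply IH; lia). lra.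
Qed.

Lemma grid_exists (f : R -> R) (nu : nat) (x : nat -> R) :
  piecewise_smooth_rational f nu x ->
  exists L a, grid_ok nu x L a /\
    (forall i, (1 <= i <= nu)%nat -> 0 <= xx x (i - 1) <= xx x i /\ xx x i <= 1).
Proof.
  intros [_ [Hnu [Hrat [H0 [H1 [Hinc _]]]]]].
  assert (Hb : forall i, (i <= nu)%nat -> 0 <= xx x i < 1).
  { intros [|i] Hi; simpl; [lra|].
    pose proof (chain_lo nu x Hinc (S i) ltac:(lia)).
    pose proof (chain_hi nu x Hinc (nu - S i) (S i) ltac:(lia) ltac:(lia)). lra. }
  assert (Ho : forall i, (1 <= i <= nu)%nat -> xx x (i - 1) <= xx x i).
  { intros [|[|i]] Hi; [lia| simpl; lra|].
    replace (S (S i) - 1)%nat with (S i) by lia. simpl. apply Rlt_le, Hinc. lia. }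
  destruct (common_den nu x Hrat) as [L [HL HLz]].
  assert (Hz : forall i, (i <= nu)%nat -> exists z : Z, xx x i * INR L = IZR z).
  { intros [|i] Hi; [exists 0%Z; simpl; ring| simpl; apply HLz; lia]. }
  pose proof (INRpos L HL).
  exists L, (fun i => Z.to_nat (Int_part (xx x i * INR L))).
  split; [split; [exact HL| split; [|exact Ho]]|].
  - intros i Hi. destruct (Hz i Hi) as [z E]. rewrite E.
    rewrite (Int_part_eq (IZR z) z) by lra.
    destruct (Hb i Hi) as [B1 B2].
    assert (0 <= IZR z) by (rewrite <- E; apply Rmult_le_pos; lra).
    apply le_IZR in H2.
    assert (IZR z < INR L) by (rewrite <- E; nra).
    rewrite INR_IZR_INZ in H3. apply lt_IZR in H3.
    split.
    + rewrite INR_IZR_INZ, Z2Nat.id by lia. rewrite <- E. field. lra.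
    + lia.
  - intros i Hi. pose proof (Ho i Hi). pose proof (Hb i ltac:(lia)). pose proof (Hb (i-1)%nat ltac:(lia)). lra.
Qed.

Lemma small_be (b e qn L c aK : R) : 0 <= b -> 0 < e -> 1 <= qn -> 1 <= L -> 0 < c ->
  c <= 1 / (2 * L) -> b <= c * aK -> e * qn * aK < 1 -> b * e < 1 / (qn * L).
Proof.
  intros Hb He Hq HL Hc Hc2 Hba Hea.
  assert (H1 : b * e * qn <= c * (e * qn * aK)).
  { replace (c * (e * qn * aK)) with ((c * aK) * (e * qn)) by ring.
    rewrite Rmult_assoc. apply Rmult_le_compat_r; nra. }
  assert (H2 : c * (e * qn * aK) < c) by nra.
  assert (H3 : c * (2 * L) <= 1).
  { apply (Rmult_le_compat_r (2 * L)) in Hc2; [|lra]. replace (1 / (2 * L) * (2 * L)) with 1 in Hc2 by (field; lra). lra. }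
  apply (Rmult_lt_reg_r (qn * L)); [nra|]. replace (1 / (qn * L) * (qn * L)) with 1 by (field; lra).
  nra.
Qed.

Lemma plus_case nu x A L a s al K c kap b :
  grid_ok nu x L a -> RInt (gfun nu x A) 0 1 = 0 -> (s <= 1)%nat ->
  0 < al < 1 -> ~ is_rational al ->
  (Z.of_nat K mod 2 = 1 mod 2)%Z ->
  (cf_q al (K - 1) mod Z.of_nat L = (- Z.of_nat s) mod Z.of_nat L)%Z ->
  0 < kap -> 0 < c -> c <= 1 / (2 * INR L) -> c <= kap -> 1 / kap + 1 <= IZR (cf_a al K) ->
  INR b <= c * IZR (cf_a al K) ->
  Rabs (SN (gfun nu x A) al (b * Z.to_nat (cf_q al (K - 1)))
        - INR b * (- sum1 A nu / 2 + INR s * Cc nu x A))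
    <= Rabs (sum1 A nu) * INR b * 2 * kap / 2.
Proof.
  intros Hg HI Hs H1 H2 HK HqL Hk Hc Hc2 Hck HaK Hb.
  destruct (par1 K HK) as [t ->]. replace (S (2 * t) - 1)%nat with (2 * t)%nat in * by lia.
  destruct (cf_key al H1 H2 (2 * t)) as [p [u [v [Bz [He [HU [HUa Hq1]]]]]]].
  rewrite pow_1_even, Rmult_1_l in He.
  set (qn := Z.to_nat (cf_q al (2 * t))).
  assert (Eqn : INR qn = IZR (cf_q al (2 * t))) by (unfold qn; rewrite INR_IZR_INZ, Z2Nat.id; [reflexivity| lia]).
  assert (Zqn : Z.of_nat qn = cf_q al (2 * t)) by (unfold qn; lia).
  destruct Hg as [HL Hg'].
  destruct (cong_neg (cf_q al (2 * t)) L s HL Hq1 HqL) as [m Hm].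
  assert (HqnL : (1 <= qn)%nat) by (unfold qn; lia).
  assert (HLr : 1 <= INR L) by (pose proof (le_INR 1 L HL); simpl in *; lra).
  assert (Hqr : 1 <= INR qn) by (pose proof (le_INR 1 qn HqnL); simpl in *; lra).
  assert (Hak : 0 < IZR (cf_a al (S (2 * t)))).
  { assert (0 < 1 / kap) by (apply Rdiv_lt_0_compat; lra). lra. }
  rewrite (core_plus nu x A L a al qn m s p u v (UU al (2 * t)) b); auto.
  - rewrite mult_INR.
    replace (INR b * (- sum1 A nu / 2 + INR s * Cc nu x A) +
       sum1 A nu * UU al (2 * t) / INR qn * (INR b * INR qn * (INR b * INR qn + 1) / 2) -
       INR b * (- sum1 A nu / 2 + INR s * Cc nu x A))
      with (sum1 A nu * UU al (2 * t) / INR qn * (INR b * INR qn * (INR b * INR qn + 1) / 2)) by ring.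
    apply (drift_bound _ _ _ _ (IZR (cf_a al (S (2 * t)))) c); auto.
    + apply pos_INR.
    + rewrite Rabs_pos_eq by lra. rewrite Eqn. exact HUa.
    + assert (1 / IZR (cf_a al (S (2 * t))) < kap); [|lra].
      apply (Rmult_lt_reg_r (IZR (cf_a al (S (2 * t))))); [lra|].
      replace (1 / IZR (cf_a al (S (2 * t))) * IZR (cf_a al (S (2 * t)))) with 1 by (field; lra).
      apply (Rmult_le_compat_l kap) in HaK; [|lra].
      replace (kap * (1 / kap + 1)) with (1 + kap) in HaK by (field; lra). lra.
  - split; auto.
  - rewrite Zqn. exact Bz.
  - rewrite Eqn. lra.
  - apply (small_be _ _ _ _ c (IZR (cf_a al (S (2 * t))))); auto;
      first [apply pos_INR | lra | rewrite Eqn; exact HUa].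
Qed.

Lemma minus_case nu x A L a s al K c kap b :
  grid_ok nu x L a -> RInt (gfun nu x A) 0 1 = 0 -> (s <= 1)%nat ->
  0 < al < 1 -> ~ is_rational al -> (1 <= K)%nat ->
  (Z.of_nat K mod 2 = 0 mod 2)%Z ->
  (cf_q al (K - 1) mod Z.of_nat L = (Z.of_nat s) mod Z.of_nat L)%Z ->
  0 < kap -> 0 < c -> c <= 1 / (2 * INR L) -> c <= kap -> 1 / kap + 1 <= IZR (cf_a al K) ->
  INR b <= c * IZR (cf_a al K) ->
  Rabs (SN (gfun nu x A) al (b * Z.to_nat (cf_q al (K - 1)))
        - INR b * (sum1 A nu / 2 - INR s * Cc nu x A))
    <= Rabs (sum1 A nu) * INR b * 2 * kap / 2.
Proof.
  intros Hg HI Hs H1 H2 HK1 HK HqL Hk Hc Hc2 Hck HaK Hb.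
  destruct (par0 K HK HK1) as [t ->]. replace (S (S (2 * t)) - 1)%nat with (S (2 * t))%nat in * by lia.
  destruct (cf_key al H1 H2 (S (2 * t))) as [p [u [v [Bz [He [HU [HUa Hq1]]]]]]].
  rewrite pow_1_odd in He.
  set (qn := Z.to_nat (cf_q al (S (2 * t)))).
  assert (Eqn : INR qn = IZR (cf_q al (S (2 * t)))) by (unfold qn; rewrite INR_IZR_INZ, Z2Nat.id; [reflexivity| lia]).
  assert (Zqn : Z.of_nat qn = cf_q al (S (2 * t))) by (unfold qn; lia).
  destruct Hg as [HL Hg'].
  destruct (cong_pos (cf_q al (S (2 * t))) L s HL Hq1 Hs HqL) as [m Hm].
  assert (HqnL : (1 <= qn)%nat) by (unfold qn; lia).
  assert (HLr : 1 <= INR L) by (pose proof (le_INR 1 L HL); simpl in *; lra).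
  assert (Hqr : 1 <= INR qn) by (pose proof (le_INR 1 qn HqnL); simpl in *; lra).
  assert (Hak : 0 < IZR (cf_a al (S (S (2 * t))))).
  { assert (0 < 1 / kap) by (apply Rdiv_lt_0_compat; lra). lra. }
  rewrite (core_minus nu x A L a al qn m s p u v (- UU al (S (2 * t))) b); auto.
  - rewrite mult_INR.
    replace (INR b * (sum1 A nu / 2 - INR s * Cc nu x A) +
       sum1 A nu * - UU al (S (2 * t)) / INR qn * (INR b * INR qn * (INR b * INR qn + 1) / 2) -
       INR b * (sum1 A nu / 2 - INR s * Cc nu x A))
      with (sum1 A nu * - UU al (S (2 * t)) / INR qn * (INR b * INR qn * (INR b * INR qn + 1) / 2)) by ring.
    apply (drift_bound _ _ _ _ (IZR (cf_a al (S (S (2 * t))))) c); auto.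
    + apply pos_INR.
    + rewrite Rabs_Ropp, Rabs_pos_eq by lra. rewrite Eqn. exact HUa.
    + assert (1 / IZR (cf_a al (S (S (2 * t)))) < kap); [|lra].
      apply (Rmult_lt_reg_r (IZR (cf_a al (S (S (2 * t)))))); [lra|].
      replace (1 / IZR (cf_a al (S (S (2 * t)))) * IZR (cf_a al (S (S (2 * t))))) with 1 by (field; lra).
      apply (Rmult_le_compat_l kap) in HaK; [|lra].
      replace (kap * (1 / kap + 1)) with (1 + kap) in HaK by (field; lra). lra.
  - split; auto.
  - rewrite Zqn. exact Bz.
  - rewrite Eqn. lra.
  - lra.
  - rewrite Ropp_involutive.
    apply (small_be _ _ _ _ c (IZR (cf_a al (S (S (2 * t)))))); auto;
      first [apply pos_INR | lra | rewrite Eqn; exact HUa].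
Qed.

Lemma abs_between X Y : Rabs X <= Y -> - Y <= X <= Y.
Proof. unfold Rabs; destruct Rcase_abs; intros; lra. Qed.

Lemma suma_nonneg al n : 0 < al < 1 -> ~ is_rational al ->
  0 <= sum1 (fun i => IZR (cf_a al i)) n.
Proof.
  intros H1 H2. apply sum1_nonneg. intros i Hi.
  replace i with (S (i - 1)) by lia. destruct (a_props al H1 H2 (i - 1)) as [A1 _].
  apply IZR_le in A1. lra.
Qed.

Theorem lemma3p8 (f : R -> R) (nu : nat) (x A : nat -> R)
  (Hf : piecewise_smooth_rational f nu x)
  (HA : jumps f nu x A)
  (Hjump : exists i, (1 <= i <= nu)%nat /\ A i <> 0)
  (Hnd : sum1 A nu <> 0 \/
         sum1 (fun i => cc A i * (xx x i - xx x (i - 1))) nu <> 0) :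
  exists c c' : R, 0 < c /\ 0 < c' /\
  exists mu1 beta1 gamma1 delta1 mu2 beta2 gamma2 delta2 : Z,
    (0 < beta1)%Z /\ (0 < delta1)%Z /\ (0 < beta2)%Z /\ (0 < delta2)%Z /\
  exists D : R, 0 < D /\
  forall alpha : R, 0 < alpha < 1 -> ~ is_rational alpha ->
  exists (K0 : nat) (a0 : R),
  forall K : nat, (K0 <= K)%nat -> a0 <= IZR (cf_a alpha K) ->
    (( (Z.of_nat K mod beta1 = mu1 mod beta1)%Z /\
       (cf_q alpha (K - 1) mod delta1 = gamma1 mod delta1)%Z ) ->
     forall b : nat, INR b <= c * IZR (cf_a alpha K) ->
       SN (gfun nu x A) alpha (b * Z.to_nat (cf_q alpha (K - 1)))
         >= INR b * c' - D * sum1 (fun i => IZR (cf_a alpha i)) (K - 1)) /\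
    (( (Z.of_nat K mod beta2 = mu2 mod beta2)%Z /\
       (cf_q alpha (K - 1) mod delta2 = gamma2 mod delta2)%Z ) ->
     forall b : nat, INR b <= c * IZR (cf_a alpha K) ->
       SN (gfun nu x A) alpha (b * Z.to_nat (cf_q alpha (K - 1)))
         <= - (INR b * c') + D * sum1 (fun i => IZR (cf_a alpha i)) (K - 1)).
Proof.
  destruct (grid_exists f nu x Hf) as [L [a [Hg Hbd]]].
  pose proof (RInt_g nu x A Hbd) as HI.
  change (sum1 (fun i => cc A i * (xx x i - xx x (i - 1))) nu) with (Cc nu x A) in Hnd.
  set (Sv := sum1 A nu) in *. set (Cv := Cc nu x A) in *.
  assert (Hs : exists s, (s <= 1)%nat /\ - Sv / 2 + INR s * Cv <> 0).
  { destruct (Req_dec (- Sv / 2 + Cv) 0) as [E|E].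
    - exists 0%nat. split; [lia|]. simpl. intros E2. destruct Hnd; lra.
    - exists 1%nat. split; [lia|]. simpl. rewrite Rmult_1_l. exact E. }
  destruct Hs as [s [Hs Ht]].
  set (tau := - Sv / 2 + INR s * Cv) in *.
  assert (Hta : 0 < Rabs tau) by (apply Rabs_pos_lt; exact Ht).
  pose proof (Rabs_pos Sv) as HSv.
  set (kap := Rabs tau / (2 * (Rabs Sv + 1))).
  assert (Hk : 0 < kap) by (unfold kap; apply Rdiv_lt_0_compat; lra).
  assert (HSk : Rabs Sv * kap <= Rabs tau / 2).
  { unfold kap. apply (Rmult_le_reg_r (2 * (Rabs Sv + 1))); [lra|].
    replace (Rabs Sv * (Rabs tau / (2 * (Rabs Sv + 1))) * (2 * (Rabs Sv + 1))) with (Rabs Sv * Rabs tau) by (field; lra).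
    nra. }
  destruct Hg as [HL Hg'] eqn:EHg.
  assert (HLr : 1 <= INR L) by (pose proof (le_INR 1 L HL); simpl in *; lra).
  set (c := Rmin (1 / (2 * INR L)) kap).
  assert (Hc : 0 < c) by (apply Rmin_pos; [apply Rdiv_lt_0_compat; lra| exact Hk]).
  assert (Hc1 : c <= 1 / (2 * INR L)) by apply Rmin_l.
  assert (Hc2 : c <= kap) by apply Rmin_r.
  assert (Hb : forall b : nat, Rabs Sv * INR b * 2 * kap / 2 <= INR b * (Rabs tau / 2)).
  { intros b. pose proof (pos_INR b). replace (Rabs Sv * INR b * 2 * kap / 2) with (INR b * (Rabs Sv * kap)) by field.
    apply Rmult_le_compat_l; lra. }
  exists c, (Rabs tau / 2). split; [exact Hc|]. split; [lra|].
  destruct (Rlt_le_dec 0 tau) as [Hpos|Hneg].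
  - assert (Et : Rabs tau = tau) by (apply Rabs_pos_eq; lra). rewrite Et in *.
    exists 1%Z, 2%Z, (- Z.of_nat s)%Z, (Z.of_nat L), 0%Z, 2%Z, (Z.of_nat s), (Z.of_nat L).
    split; [lia|]. split; [lia|]. split; [lia|]. split; [lia|].
    exists 1. split; [lra|]. intros al Hal Hir. exists 1%nat, (1 / kap + 1).
    intros K HK HaK. pose proof (suma_nonneg al (K - 1) Hal Hir) as Hsum. split.
    + intros [C1 C2] b Hbb.
      pose proof (plus_case nu x A L a s al K c kap b Hg HI Hs Hal Hir C1 C2 Hk Hc Hc1 Hc2 HaK Hbb) as P.
      apply abs_between in P. pose proof (Hb b). assert (INR b * (tau / 2) = INR b * tau / 2) by field. assert (INR b * (- tau / 2) = - (INR b * tau) / 2) by field. fold Sv Cv tau in P. lra.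
    + intros [C1 C2] b Hbb.
      pose proof (minus_case nu x A L a s al K c kap b Hg HI Hs Hal Hir HK C1 C2 Hk Hc Hc1 Hc2 HaK Hbb) as P.
      apply abs_between in P. pose proof (Hb b). assert (INR b * (tau / 2) = INR b * tau / 2) by field. assert (INR b * (- tau / 2) = - (INR b * tau) / 2) by field. fold Sv Cv in P.
      replace (Sv / 2 - INR s * Cv) with (- tau) in P by (unfold tau; field). lra.
  - assert (Hneg' : tau < 0) by lra.
    assert (Et : Rabs tau = - tau) by (apply Rabs_left; lra). rewrite Et in *.
    exists 0%Z, 2%Z, (Z.of_nat s), (Z.of_nat L), 1%Z, 2%Z, (- Z.of_nat s)%Z, (Z.of_nat L).
    split; [lia|]. split; [lia|]. split; [lia|]. split; [lia|].
    exists 1. split; [lra|]. intros al Hal Hir. exists 1%nat, (1 / kap + 1).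
    intros K HK HaK. pose proof (suma_nonneg al (K - 1) Hal Hir) as Hsum. split.
    + intros [C1 C2] b Hbb.
      pose proof (minus_case nu x A L a s al K c kap b Hg HI Hs Hal Hir HK C1 C2 Hk Hc Hc1 Hc2 HaK Hbb) as P.
      apply abs_between in P. pose proof (Hb b). assert (INR b * (tau / 2) = INR b * tau / 2) by field. assert (INR b * (- tau / 2) = - (INR b * tau) / 2) by field. fold Sv Cv in P.
      replace (Sv / 2 - INR s * Cv) with (- tau) in P by (unfold tau; field). lra.
    + intros [C1 C2] b Hbb.
      pose proof (plus_case nu x A L a s al K c kap b Hg HI Hs Hal Hir C1 C2 Hk Hc Hc1 Hc2 HaK Hbb) as P.
      apply abs_between in P. pose proof (Hb b). assert (INR b * (tau / 2) = INR b * tau / 2) by field. assert (INR b * (- tau / 2) = - (INR b * tau) / 2) by field. fold Sv Cv tau in P. lra.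
Qed.
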